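(* Let $\mathcal{A}=\{\pm e_1,\ldots,\pm e_n\}$ be the set of signed canonical unit vectors in $\mathbb{R}^n$, so that $\|\cdot\|_{\mathcal{A}}=\|\cdot\|_1$. Suppose $x^\star\in\mathbb{R}^n$ has $k\ge1$ nonzero entries, and let $\gamma\in[0,1]$. Then $$\phi_\gamma(x^\star,\mathcal{A}):=\inf\left\{\frac{\|z\|_2}{\|z\|_1}: 0\ne z\in C_\gamma(x^\star,\mathcal{A})\right\}\ \ge\ \frac{1-\gamma}{2\sqrt{k}},$$ where $C_\gamma(x^\star,\mathcal{A})=\operatorname{cone}\left(\{z\in\mathbb{R}^n:\|x^\star+z\|_1\le\|x^\star\|_1+\gamma\|z\|_1\}\right)$.
   Context: $\operatorname{cone}(X)=\{\lambda x:\lambda\ge0,x\in X\}$ denotes the conic hull. *)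

(* Defs.v *)
From HB Require Import structures.
From mathcomp Require Import all_boot all_order all_algebra.
From mathcomp Require Import reals.
Set Implicit Arguments. Unset Strict Implicit. Unset Printing Implicit Defensive.
Import Order.TTheory GRing.Theory Num.Theory.
Local Open Scope ring_scope.

Section Defs.
Variable R : realType.

(* l1 norm (= atomic norm for A = {+-e_1,...,+-e_n}) *)
Definition l1norm (n : nat) (z : 'rV[R]_n) : R := \sum_(i < n) `|z 0 i|.

Definition l2norm (n : nat) (z : 'rV[R]_n) : R := Num.sqrt (\sum_(i < n) z 0 i ^+ 2).

Definition gamma_descent (n : nat) (gamma : R) (xs : 'rV[R]_n) (z : 'rV[R]_n) : Prop :=
  l1norm (xs + z) <= l1norm xs + gamma * l1norm z.

Definition cone (n : nat) (X : 'rV[R]_n -> Prop) (v : 'rV[R]_n) : Prop :=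
  exists (l : R) (x : 'rV[R]_n), 0 <= l /\ X x /\ v = l *: x.

Definition C_gamma (n : nat) (gamma : R) (xs : 'rV[R]_n) : 'rV[R]_n -> Prop :=
  cone (gamma_descent gamma xs).

End Defs.

(* Main.v *)
Require Import Defs.
From HB Require Import structures.
From mathcomp Require Import all_boot all_order all_algebra.
From mathcomp Require Import reals ring lra.
From mathcomp Require Import reals ring lra.
Import Order.TTheory GRing.Theory Num.Theory.
Local Open Scope ring_scope.

Lemma cs (R : realType) (I : finType) (S : {set I}) (a : I -> R) :
  (\sum_(i in S) a i)^+2 <= #|S|%:R * \sum_(i in S) a i ^+ 2.
Proof.
have [k0|kpos] := posnP #|S|.
  by move/eqP: k0; rewrite cards_eq0 => /eqP ->; rewrite !big_set0 expr0n /= mulr0.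
set A := \sum_(i in S) a i; set Q := \sum_(i in S) a i ^+ 2.
set k := #|S|%:R.
have kp : 0 < k :> R by rewrite ltr0n.
set m := A / k.
have H : 0 <= \sum_(i in S) (a i - m) ^+ 2 by apply: sumr_ge0 => i _; exact: sqr_ge0.
have E : \sum_(i in S) (a i - m) ^+ 2 = Q - m * A * 2 + k * m ^+ 2.
  under eq_bigr do rewrite sqrrB.
  rewrite big_split /= sumrB sumrMnl -mulr_suml sumr_const -/A -/Q.
  by rewrite /k mulr_natl [m * A]mulrC mulr_natr.
rewrite E in H.
have Hm : m * k = A by rewrite /m divfK // gt_eqF.
have E2 : k * (Q - m * A * 2 + k * m ^+ 2) = k * Q - A ^+ 2.
  by rewrite -Hm; ring.
by rewrite -subr_ge0 -E2 mulr_ge0 // ltW.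
Qed.

Theorem proposition4 (R : realType) (n : nat) (xs : 'rV[R]_n) (k : nat) (gamma : R) :
  k = #|[set i : 'I_n | xs 0 i != 0]| ->
  (1 <= k)%N ->
  0 <= gamma <= 1 ->
  forall z : 'rV[R]_n, C_gamma gamma xs z -> z != 0 ->
    (1 - gamma) / (2 * Num.sqrt (k%:R)) <= l2norm z / l1norm z.
Proof.
move=> kE k1 /andP[g0 g1] z [l [x [l0 [hx zE]]]] nz.
set S := [set i : 'I_n | xs 0 i != 0].
have key : (1 - gamma) * l1norm x <= 2 * \sum_(i in S) `|x 0 i|.
  move: hx; rewrite /gamma_descent /l1norm.
  rewrite (bigID (fun i => i \in S)) /= [X in _ <= X + _](bigID (fun i => i \in S)) /=.
  rewrite [X in _ <= _ + _ * X](bigID (fun i => i \in S)) /=.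
  have z1 : \sum_(i | i \notin S) `|xs 0 i| = 0.
    by apply: big1 => i; rewrite inE negbK => /eqP ->; rewrite normr0.
  have z2 : \sum_(i | i \notin S) `|(xs + x) 0 i| = \sum_(i | i \notin S) `|x 0 i|.
    by apply: eq_bigr => i; rewrite inE negbK mxE => /eqP ->; rewrite add0r.
  have z3 : \sum_(i in S) `|xs 0 i| - \sum_(i in S) `|x 0 i| <= \sum_(i in S) `|(xs + x) 0 i|.
    rewrite -sumrB; apply: ler_sum => i _; rewrite mxE; exact: lerB_normD.
  rewrite z1 z2 addr0 => h.
  set a := \sum_(i in S) `|x 0 i| in z3 h *.
  set b := \sum_(i | i \notin S) `|x 0 i| in z3 h *.
  rewrite (bigID (fun i => i \in S)) /= -/a -/b.
  nra.
have sc1 : l1norm z = l * l1norm x.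
  rewrite /l1norm mulr_sumr zE; apply: eq_bigr => i _.
  by rewrite mxE normrM ger0_norm.
have sc2 : \sum_(i in S) `|z 0 i| = l * \sum_(i in S) `|x 0 i|.
  rewrite mulr_sumr zE; apply: eq_bigr => i _.
  by rewrite mxE normrM ger0_norm.
have key2 : (1 - gamma) * l1norm z <= 2 * \sum_(i in S) `|z 0 i|.
  rewrite sc1 sc2 mulrCA [2 * _]mulrCA; exact: ler_wpM2l.
have [i zi] : exists i, z 0 i != 0.
  apply/existsP; apply: contraR nz => /existsPn H; apply/eqP/rowP => j.
  by rewrite !mxE; apply/eqP; rewrite -[_ == _]negbK H.
have l1p : 0 < l1norm z.
  rewrite /l1norm (bigD1 i) //= ltr_wpDr ?normr_gt0 //.
  by apply: sumr_ge0 => j _; exact: normr_ge0.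
have kp : 0 < Num.sqrt (k%:R : R) by rewrite sqrtr_gt0 ltr0n.
set A := \sum_(i in S) `|z 0 i|.
have A0 : 0 <= A by apply: sumr_ge0 => j _; exact: normr_ge0.
have cs1 : A ^+ 2 <= k%:R * \sum_(i < n) z 0 i ^+ 2.
  have h := cs _ _ S (fun i => `|z 0 i|); rewrite -/A in h.
  apply: le_trans h _.
  rewrite -kE ler_wpM2l ?ler0n //.
  rewrite [X in _ <= X](bigID (fun i => i \in S)) /=.
  apply: ler_wpDr.
    by apply: sumr_ge0 => j _; exact: sqr_ge0.
  by apply: ler_sum => j _; rewrite real_normK ?num_real.
have cs2 : A <= Num.sqrt (k%:R) * l2norm z.
  rewrite /l2norm -sqrtrM ?ler0n // -(ger0_norm A0) -sqrtr_sqr ler_sqrt //.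
  by rewrite mulr_ge0 ?ler0n // sumr_ge0 // => j _; exact: sqr_ge0.
rewrite ler_pdivlMr // mulrAC ler_pdivrMr ?mulr_gt0 //.
apply: le_trans key2 _.
rewrite mulrCA ler_wpM2l // mulrC; exact: cs2.
Qed.
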